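(* Let $G$ be a finite, simple, connected, undirected graph of order $n\ge 2$ and let $A\subseteq V(G)$ be nonempty. Then $P_A(G)=1$ if and only if $A$ is a (classical) zero forcing set of $G$.
   Context: Classical zero forcing: given a set of black vertices (the rest white), the color change rule turns a white vertex $v$ black if $v$ is the only white neighbor of some black vertex $u$. A set $S$ is a zero forcing set if starting with $S$ black, finitely many applications of this rule make all of $V(G)$ black. Probabilistic process: for a vertex $u$, $N(u)$ is its open neighborhood, $N[u]=N(u)\cup\{u\}$, $\deg(u)=|N(u)|$. Given a current black set $Z$, $F(u\to v)=0$ if $u\notin Z$, or $v\notin N(u)$, or $N[u]\subseteq Z$; otherwise $F(u\to v)=|N[u]\cap Z|/\deg(u)$. One global application of the probabilistic color change rule: black vertices stay black; independently for every pair $(u,v)$ with $u$ black and $v\in N(u)$ white, $u$ forces $v$ with probability $F(u\to v)$; a white vertex becomes black iff some black neighbor forces it. Starting with black set $A$ at step $0$ and applying this rule repeatedly, let $S^k$ be the set of colorings reachable with positive probability after exactly $k$ steps and $P^{(k)}$ the probability distribution on them. Let $T^k\subseteq S^k$ be the colorings whose black set contains a classical zero forcing set of $G$. Define $P_A(G)=P^{(k_0)}(T^{k_0})$ where $k_0$ is the least $k\ge 0$ with $T^k\neq\emptyset$. *)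

(* Defs.v *)
From HB Require Import structures.
From mathcomp Require Import all_boot all_order all_algebra.
From Stdlib Require Import Relations ClassicalEpsilon.
Set Implicit Arguments. Unset Strict Implicit. Unset Printing Implicit Defensive.
Import Order.TTheory GRing.Theory Num.Theory.

Section Graph.
Variable T : finType.
Variable e : rel T.

Definition nbhd (u : T) : {set T} := [set w | e u w].
Definition cnbhd (u : T) : {set T} := u |: nbhd u.
Definition deg (u : T) : nat := #|nbhd u|.

Definition force1 (Z Z' : {set T}) : Prop :=
  exists u v, [/\ u \in Z, v \notin Z, e u v,
    (forall w, e u w -> w \notin Z -> w = v) & Z' = v |: Z].

Definition zero_forcing (S : {set T}) : Prop :=
  clos_refl_trans {set T} force1 S [set: T].

Local Open Scope ring_scope.

Definition Fprob (Z : {set T}) (u v : T) : rat :=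
  if [&& u \in Z, e u v & ~~ (cnbhd u \subset Z)]
  then (#|cnbhd u :&: Z|%:R / (deg u)%:R) else 0.

Definition pairs (Z : {set T}) : {set T * T} :=
  [set p : T * T | [&& p.1 \in Z, e p.1 p.2 & p.2 \notin Z]].

(* probability that one global application of the rule takes Z to Z':
   sum over all subsets E of successful forcing events (independent). *)
Definition step (Z Z' : {set T}) : rat :=
  \sum_(E : {set T * T} | E \subset pairs Z)
     ((Z :|: [set v | [exists u, (u, v) \in E]]) == Z')%:R *
     \prod_(p in pairs Z)
        (if p \in E then Fprob Z p.1 p.2 else 1 - Fprob Z p.1 p.2).

Fixpoint Pk (A : {set T}) (k : nat) (Z : {set T}) : rat :=
  match k with
  | 0 => (Z == A)%:R
  | k'.+1 => \sum_(Z0 : {set T}) Pk A k' Z0 * step Z0 Z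
  end.

Definition inTk (A : {set T}) (k : nat) (Z : {set T}) : bool :=
  if excluded_middle_informative
       (0 < Pk A k Z /\ exists S : {set T}, S \subset Z /\ zero_forcing S)
  then true else false.

(* "P_A(G) = p": k0 is the least k with T^k nonempty and P^(k0)(T^(k0)) = p *)
Definition PA_eq (A : {set T}) (p : rat) : Prop :=
  exists k0 : nat,
    [/\ exists Z, inTk A k0 Z,
        forall k, (k < k0)%N -> forall Z, ~~ inTk A k Z
      & \sum_(Z | inTk A k0 Z) Pk A k0 Z = p].

End Graph.

Definition simple_connected (T : finType) (e : rel T) : Prop :=
  [/\ ssrbool.symmetric e, ssrbool.irreflexive e & forall x y, connect e x y].

(* Main.v *)
Require Import Defs.
From HB Require Import structures.
From mathcomp Require Import all_boot all_order all_algebra.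
From Stdlib Require Import Relations ClassicalEpsilon Classical.
From mathcomp Require Import zify lra.
Set Implicit Arguments. Unset Strict Implicit. Unset Printing Implicit Defensive.
Import Order.TTheory GRing.Theory Num.Theory.

Local Open Scope ring_scope.

Lemma sum_subset_prod (X : finType) (P : {set X}) (a b : X -> rat) :
  \sum_(E : {set X} | E \subset P) \prod_(p in P) (if p \in E then a p else b p)
  = \prod_(p in P) (a p + b p).
Proof.
have := @bigA_distr rat 0 1 *%R +%R _
  (fun i => if i \in P then a i else 0) (fun i => if i \in P then b i else 1).
rewrite /= => H.
rewrite big_mkcond /= [RHS]big_mkcond /=.
transitivity (\prod_i ((if i \in P then a i else 0) + (if i \in P then b i else 1))); last first.
  by apply: eq_bigr => i _; case: (i \in P); rewrite ?add0r.
rewrite H; symmetry; apply: eq_big => [J|J _]; first by []. symmetry.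
case: ifP => HJ.
  rewrite big_mkcond; apply: eq_bigr => i _ /=.
  case: ifP => iP //; case: ifP => iJ //.
  by move/subsetP: HJ => /(_ i iJ); rewrite iP.
have [i iJ niP] : exists2 i, i \in J & i \notin P.
  by apply/exists_inP; apply: contraFT HJ => /exists_inPn H1; apply/subsetP => x /H1 /negbNE.
by rewrite (bigD1 i) //= iJ (negbTE niP) mul0r.
Qed.

Section Main.
Variable T : finType.
Variable e : rel T.
Hypothesis irr : irreflexive e.

Definition classical (Z : {set T}) (u v : T) : bool :=
  [&& u \in Z, e u v, v \notin Z & [forall w, (e u w && (w \notin Z)) ==> (w == v)]].

Definition E0 (Z : {set T}) : {set T * T} := [set p | classical Z p.1 p.2].
Definition nextZ (Z : {set T}) : {set T} := Z :|: [set v | [exists u, (u, v) \in E0 Z]].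

Lemma card_cnbhd u : #|cnbhd e u| = (deg e u).+1.
Proof. by rewrite /cnbhd cardsU1 /nbhd inE irr. Qed.

Lemma Fprob_ge0 Z u v : 0 <= Fprob e Z u v.
Proof. rewrite /Fprob; case: ifP => // _; exact: divr_ge0. Qed.

Lemma Fprob_le1 Z u v : Fprob e Z u v <= 1.
Proof.
rewrite /Fprob; case: ifP => // /and3P [uZ euv nsub].
have dpos : (0 < deg e u)%N by apply/card_gt0P; exists v; rewrite inE.
rewrite ler_pdivrMr ?ltr0n // mul1r ler_nat -ltnS -card_cnbhd.
apply: proper_card; rewrite properEneq subsetIl andbT.
by apply: contra nsub => /eqP <-; rewrite subsetIr.
Qed.

Lemma cnbhdD_class Z u v : classical Z u v -> cnbhd e u :\: Z = [set v].
Proof.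
case/and4P => uZ euv vZ /forallP H; apply/setP => x.
rewrite /cnbhd /nbhd !inE.
apply/idP/idP.
  case/andP => xZ /orP [/eqP xu | eux]; first by rewrite xu uZ in xZ.
  by have := H x; rewrite eux xZ.
by move/eqP ->; rewrite vZ euv orbT.
Qed.

Lemma Fprob_class Z u v : classical Z u v -> Fprob e Z u v = 1.
Proof.
move=> Hc; have Hd := cnbhdD_class Hc.
case/and4P: Hc => uZ euv vZ _.
have dpos : (0 < deg e u)%N by apply/card_gt0P; exists v; rewrite inE.
rewrite /Fprob uZ euv /=.
have -> : ~~ (cnbhd e u \subset Z).
  have vN : v \in cnbhd e u by rewrite /cnbhd /nbhd !inE euv orbT.
  by apply/negP => /subsetP /(_ v vN); apply/negP.
have := cardsID Z (cnbhd e u); rewrite Hd cards1 card_cnbhd addn1 => [[->]].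
by rewrite divff // pnatr_eq0 -lt0n.
Qed.

Lemma Fprob_nclass (Z : {set T}) u v : u \in Z -> e u v -> v \notin Z -> ~~ classical Z u v ->
  Fprob e Z u v < 1.
Proof.
move=> uZ euv vZ; rewrite /classical uZ euv vZ /= => /forallPn [w].
rewrite negb_imply => /andP [/andP [euw wZ] wv].
have dpos : (0 < deg e u)%N by apply/card_gt0P; exists v; rewrite inE.
rewrite /Fprob uZ euv /=.
have -> : ~~ (cnbhd e u \subset Z).
  have vN : v \in cnbhd e u by rewrite /cnbhd /nbhd !inE euv orbT.
  by apply/negP => /subsetP /(_ v vN); apply/negP.
rewrite ltr_pdivrMr ?ltr0n // mul1r ltr_nat.
have H2 : (2 <= #|cnbhd e u :\: Z|)%N.
  have <- : #|[set v; w]| = 2%N by rewrite cards2 eq_sym wv.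
  apply: subset_leq_card; apply/subsetP => x; rewrite /cnbhd /nbhd !inE.
  by case/orP => /eqP ->; rewrite ?vZ ?wZ ?euv ?euw !orbT.
have := cardsID Z (cnbhd e u); rewrite card_cnbhd; lia.
Qed.

Lemma step_ge0 Z Z' : 0 <= step e Z Z'.
Proof.
rewrite /step; apply: sumr_ge0 => E _; apply: mulr_ge0; first exact: ler0n.
apply: prodr_ge0 => p _; case: ifP => _; first exact: Fprob_ge0.
by rewrite subr_ge0 Fprob_le1.
Qed.

Lemma step_next_pos Z : 0 < step e Z (nextZ Z).
Proof.
have sub : E0 Z \subset pairs e Z.
  apply/subsetP => p; rewrite !inE => /and4P [uZ euv vZ _].
  by rewrite uZ euv vZ.
rewrite /step (bigD1 (E0 Z)) //=.
set t := (X in X + _); set r := (X in _ + X).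
have Hr : 0 <= r.
  apply: sumr_ge0 => E _; apply: mulr_ge0; first exact: ler0n.
  apply: prodr_ge0 => p _; case: ifP => _; first exact: Fprob_ge0.
  by rewrite subr_ge0 Fprob_le1.
have Ht : 0 < t.
  rewrite /t eqxx mul1r; apply: prodr_gt0 => p.
  rewrite !inE => /and3P [uZ euv vZ].
  case: ifP => Hc; first by rewrite Fprob_class.
  by rewrite subr_gt0 Fprob_nclass // Hc.
lra.
Qed.

Lemma step_sum Z : \sum_Z' step e Z Z' = 1.
Proof.
rewrite /step exchange_big /=.
transitivity (\sum_(E : {set T * T} | E \subset pairs e Z)
  \prod_(p in pairs e Z) (if p \in E then Fprob e Z p.1 p.2 else 1 - Fprob e Z p.1 p.2)).
  apply: eq_bigr => E _.
  set X := (Z :|: _).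
  rewrite (bigD1 X) //= eqxx mul1r [X in _ + X]big1 ?addr0 // => Z' HZ'.
  by rewrite eq_sym (negbTE HZ') mul0r.
rewrite (sum_subset_prod (pairs e Z) (fun p => Fprob e Z p.1 p.2)).
by apply: big1 => p _; rewrite addrC subrK.
Qed.

Lemma Pk_ge0 A k Z : 0 <= Pk e A k Z.
Proof.
elim: k Z => [|k IH] Z /=; first exact: ler0n.
by apply: sumr_ge0 => Z0 _; apply: mulr_ge0 => //; apply: step_ge0.
Qed.

Lemma Pk_sum A k : \sum_Z Pk e A k Z = 1.
Proof.
elim: k => [|k IH] /=.
  by rewrite (bigD1 A) //= eqxx big1 ?addr0 // => Z /negbTE ->.
rewrite exchange_big /= -[RHS]IH; apply: eq_bigr => Z0 _.
by rewrite -big_distrr /= step_sum mulr1.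
Qed.

Definition Zk A k := iter k nextZ A.

Lemma Pk_Zk_pos A k : 0 < Pk e A k (Zk A k).
Proof.
elim: k => [|k IH] /=; first by rewrite eqxx ltr01.
rewrite (bigD1 (Zk A k)) //=.
have H1 : 0 < Pk e A k (Zk A k) * step e (Zk A k) (nextZ (Zk A k)).
  by apply: mulr_gt0 => //; apply: step_next_pos.
have H2 : 0 <= \sum_(i | i != Zk A k) Pk e A k i * step e i (nextZ (Zk A k)).
  by apply: sumr_ge0 => Z0 _; apply: mulr_ge0; [apply: Pk_ge0|apply: step_ge0].
lra.
Qed.

Lemma zf_mono (S Z : {set T}) : S \subset Z -> zero_forcing e S -> zero_forcing e Z.
Proof.
move=> SZ H0; have H := clos_rt_rt1n _ _ _ _ H0.
have gen : forall S0 W, clos_refl_trans_1n _ (force1 e) S0 W -> W = setT ->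
  forall Z0 : {set T}, S0 \subset Z0 -> zero_forcing e Z0.
  move=> S0 W; elim => [x -> Z0 sub | x y z Hxy Hyz IH Wz Z0 sub].
    have -> : Z0 = setT by apply/eqP; rewrite -subTset.
    exact: rt_refl.
  case: Hxy => [u [v [uS vS euv Hw Hy]]]; subst y.
  case: (boolP (v \in Z0)) => vZ.
    by apply: (IH Wz); rewrite subUset sub1set vZ sub.
  apply: rt_trans; [apply: rt_step | apply: (IH Wz (v |: Z0)); exact: setUS].
  exists u, v; split => //; first exact: (subsetP sub).
  move=> w euw wZ; apply: Hw => //; apply: contra wZ; exact: (subsetP sub).
exact: (gen _ _ H erefl Z SZ).
Qed.

Lemma reach_next Z : clos_refl_trans _ (force1 e) Z (nextZ Z).
Proof.
set V := [set v | [exists u, (u, v) \in E0 Z]].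
suff H : forall s : seq T, {subset s <= V} -> clos_refl_trans _ (force1 e) Z (Z :|: [set x in s]).
  have := H (enum V); rewrite set_enum; apply => x; by rewrite mem_enum.
elim => [|x s IH] sub /=.
  have -> : Z :|: [set x in [::]] = Z by apply/setP => y; rewrite !inE orbF.
  exact: rt_refl.
have IH' : clos_refl_trans _ (force1 e) Z (Z :|: [set y in s]).
  by apply: IH => y ys; apply: sub; rewrite inE ys orbT.
have eq : Z :|: [set y in x :: s] = x |: (Z :|: [set y in s]).
  by apply/setP => y; rewrite !inE orbCA.
rewrite eq; case: (boolP (x \in Z :|: [set y in s])) => xin.
  have -> : x |: (Z :|: [set y in s]) = Z :|: [set y in s].
    by apply/setP => y; rewrite in_setU1; case: eqP => // ->.
  exact: IH'.
apply: rt_trans; [exact: IH' | apply: rt_step].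
have : x \in V by apply: sub; rewrite inE eqxx.
rewrite inE => /existsP [u]; rewrite /E0 inE /= => /and4P [uZ eux xZ /forallP Hf].
exists u, x; split => //; first by rewrite inE uZ.
move=> w euw wW; apply/eqP; have := Hf w; rewrite euw /=.
suff -> : w \notin Z by [].
by apply: contra wW; rewrite inE => ->.
Qed.

Lemma reach_Zk A k : clos_refl_trans _ (force1 e) A (Zk A k).
Proof.
elim: k => [|k IH] /=; first exact: rt_refl.
exact: rt_trans IH (reach_next _).
Qed.

Lemma inTkP A k Z : inTk e A k Z <->
  (0 < Pk e A k Z /\ exists S : {set T}, S \subset Z /\ zero_forcing e S).
Proof. by rewrite /inTk; case: excluded_middle_informative. Qed.

End Main.

Theorem mainTheorem2 (T : finType) (e : rel T) (A : {set T}) :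
  simple_connected e -> (1 < #|T|)%N -> A != set0 ->
  (PA_eq e A 1%R <-> zero_forcing e A).
Proof.
move=> [_ irr _] _ _; split.
  case=> k0 [_ _ Hsum]; apply: NNPP => nA.
  set Zb := Zk e A k0.
  have nin : ~~ inTk e A k0 Zb.
    apply/negP => /inTkP [_ [S [SZ zS]]]; apply: nA.
    exact: rt_trans (reach_Zk e A k0) (zf_mono SZ zS).
  have := Pk_sum e A k0; rewrite (bigID (inTk e A k0)) /= Hsum.
  rewrite [X in _ + X](bigD1 Zb) //=.
  have pos := Pk_Zk_pos irr A k0.
  have ge : 0 <= \sum_(i | ~~ inTk e A k0 i && (i != Zb)) Pk e A k0 i.
    by apply: sumr_ge0 => i _; apply: Pk_ge0.
  rewrite -/Zb in pos; lra.
move=> zA; exists 0%N; split.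
- exists A; apply/inTkP; split; first by rewrite /= eqxx ltr01.
  by exists A; split.
- by [].
have HA : inTk e A 0 A.
  by apply/inTkP; split; [rewrite /= eqxx ltr01 | exists A; split].
rewrite (bigD1 A) //= eqxx big1 ?addr0 // => Z /andP [_ /negbTE ->].
by [].
Qed.
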